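(* For any finite family of Boolean functions $f_1,\dots,f_k:\{0,1\}^n\times\{0,1\}^n\to\{0,1\}$, the garden-hose complexity satisfies \[ GH\Big(\bigoplus_{i=1}^k f_i\Big)\ \le\ 4\sum_{i=1}^k GH(f_i), \] where $\bigoplus_i f_i$ is the pointwise XOR.
   Context: Garden-hose model: Alice holds $x$, Bob holds $y$. There are $m$ pipes, each with one end on Alice's side and one on Bob's side. Depending only on $x$, Alice connects a water tap to one of her pipe ends and connects some disjoint pairs of her remaining pipe ends by hoses; depending only on $y$, Bob connects some disjoint pairs of his pipe ends by hoses. Water from the tap flows through the resulting path and spills out of an open pipe end, on Alice's or Bob's side. A protocol computes $f$ if the water spills on Alice's side when $f(x,y)=0$ and on Bob's side when $f(x,y)=1$. $GH(f)$ is the minimal number of pipes of a garden-hose protocol computing $f$. *)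

(* Defs.v *)
From mathcomp Require Import all_boot.
From Stdlib Require Import ClassicalEpsilon.
Set Implicit Arguments. Unset Strict Implicit. Unset Printing Implicit Defensive.

Definition bits (n : nat) := n.-tuple bool.

(* A hose configuration on one side: a partial matching of the pipe ends,
   given as a function sending a pipe end to the end it is joined to (if any). *)
Definition is_matching (m : nat) (M : 'I_m -> option 'I_m) : Prop :=
  forall i j : 'I_m, M i = Some j -> j != i /\ M j = Some i.

Record gh_protocol (n m : nat) := GHProtocol {
  gh_tap   : bits n -> 'I_m;                 (* pipe whose Alice-end gets the tap *)
  gh_alice : bits n -> 'I_m -> option 'I_m;
  gh_bob   : bits n -> 'I_m -> option 'I_m
}.

Definition gh_valid (n m : nat) (P : gh_protocol n m) : Prop :=
  (forall x, is_matching (gh_alice P x) /\ gh_alice P x (gh_tap P x) = None) /\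
  (forall y, is_matching (gh_bob P y)).

(* Water has just arrived at Bob's end of pipe p.  Result: true = spills on
   Bob's side, false = spills on Alice's side.  The water path never revisits a
   pipe, so m.+1 steps of fuel always suffice (the fuel-exhausted default is
   never reached). *)
Fixpoint gh_run (m fuel : nat) (A B : 'I_m -> option 'I_m) (p : 'I_m) : bool :=
  match fuel with
  | 0 => false
  | S f =>
      match B p with
      | None => true
      | Some q =>
          match A q with
          | None => false
          | Some r => gh_run f A B r
          end
      end
  end.

Definition gh_output (n m : nat) (P : gh_protocol n m) (x y : bits n) : bool :=
  gh_run m.+1 (gh_alice P x) (gh_bob P y) (gh_tap P x).

Definition gh_computes (n m : nat) (P : gh_protocol n m)
    (f : bits n -> bits n -> bool) : Prop :=
  gh_valid P /\ forall x y, gh_output P x y = f x y.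

Definition gh_computable (n : nat) (f : bits n -> bits n -> bool) (m : nat) : Prop :=
  exists P : gh_protocol n m, gh_computes P f.

(* GH(f): the least number of pipes of a protocol computing f
   (every f has a protocol; the default 0 is never used). *)
Definition gh_computableb (n : nat) (f : bits n -> bits n -> bool) (m : nat) : bool :=
  if excluded_middle_informative (gh_computable f m) then true else false.

Definition GH (n : nat) (f : bits n -> bits n -> bool) : nat :=
  match excluded_middle_informative (exists m, gh_computableb f m) with
  | left H => ex_minn H
  | right _ => 0
  end.

Definition xor_family (n k : nat) (F : 'I_k -> bits n -> bits n -> bool) :=
  fun x y : bits n => \big[addb/false]_(i < k) F i x y.

(* Main.v *)
Require Import Defs.
From mathcomp Require Import all_boot.
From mathcomp Require Import zify.
From Stdlib Require Import ClassicalEpsilon.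
Set Implicit Arguments. Unset Strict Implicit. Unset Printing Implicit Defensive.

Section Net.
Variable T : finType.

Definition matchT (M : T -> option T) :=
  forall i j, M i = Some j -> j != i /\ M j = Some i.
Definition dart := (T * bool)%type.
Definition flipd (d : dart) : dart := (d.1, ~~ d.2).
Definition hh (A B : T -> option T) (d : dart) : option dart :=
  omap (fun q => (q, d.2)) ((if d.2 then B else A) d.1).
Definition phi A B d := omap flipd (hh A B d).
Fixpoint it A B k d := match k with 0 => Some d | k'.+1 => obind (it A B k') (phi A B d) end.
Definition gwalk A B s e := exists k, it A B k s = Some e /\ hh A B e = None.

Lemma flipdK : involutive flipd.
Proof. by case=> p s; rewrite /flipd /= negbK. Qed.

Variables (A B : T -> option T).

Lemma it_add a b d : it A B (a + b) d = obind (it A B b) (it A B a d).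
Proof.
elim: a d => [|a IH] d //=. case: (phi A B d) => //= d'.
Qed.

Lemma itS k d : it A B k.+1 d = obind (phi A B) (it A B k d).
Proof.
rewrite -addn1 it_add. case: (it A B k d) => //= d'. by case: (phi A B d').
Qed.

Lemma phiE d x : phi A B d = Some x -> hh A B d = Some (flipd x).
Proof. rewrite /phi. case: (hh A B d) => //= u [<-]. by rewrite flipdK. Qed.

Hypotheses (mA : matchT A) (mB : matchT B).

Lemma hh_inv d d' : hh A B d = Some d' -> hh A B d' = Some d /\ d' != d.
Proof.
case: d => p [] /=; rewrite /hh /=.
- case E: (B p) => [q|] //= [<-] /=. have [ne back] := mB E.
  by rewrite back; split => //; rewrite xpair_eqE (negbTE ne).
- case E: (A p) => [q|] //= [<-] /=. have [ne back] := mA E.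
  by rewrite back; split => //; rewrite xpair_eqE (negbTE ne).
Qed.

Lemma phi_inj d1 d2 x : phi A B d1 = Some x -> phi A B d2 = Some x -> d1 = d2.
Proof.
move=> /phiE /hh_inv [H1 _] /phiE /hh_inv [H2 _]. by move: H1; rewrite H2 => -[].
Qed.

Lemma it_det k j d e e' : it A B k d = Some e -> hh A B e = None ->
  it A B j d = Some e' -> hh A B e' = None -> e' = e.
Proof.
have gen : forall k j e e', k <= j -> it A B k d = Some e -> hh A B e = None ->
    it A B j d = Some e' -> e' = e.
  move=> k0 j0 e0 e0' le H0 Hh0. rewrite -(subnKC le) it_add H0 /=.
  case: (j0 - k0) => [|i] /=; first by case.
  by rewrite /phi Hh0.
move=> H1 H2 H3 H4. case: (leqP k j) => le.
- exact: gen le H1 H2 H3.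
- by symmetry; apply: gen (ltnW le) H3 H4 H1.
Qed.

Lemma it_rev k a b : it A B k a = Some b -> it A B k (flipd b) = Some (flipd a).
Proof.
elim: k a => [|k IH] a; first by case=> ->.
move=> H; have {H} : obind (it A B k) (phi A B a) = Some b by [].
case Ea: (phi A B a) => [a'|] // H; rewrite /= in H. rewrite itS (IH _ H) /=.
have := phiE Ea => /hh_inv [H' _]. by rewrite /phi H'.
Qed.

Lemma it_some k i d e : i <= k -> it A B k d = Some e -> exists c, it A B i d = Some c.
Proof.
move=> le. rewrite -(subnKC le) it_add. case: (it A B i d) => // c _. by exists c.
Qed.

Lemma no_return s k : it A B k s <> Some (flipd s).
Proof.
move=> HK.
have key : forall i d, i <= k -> it A B i s = Some d -> it A B (k - i) s = Some (flipd d).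
  move=> i d le Hi. move: HK. rewrite -(subnKC le) it_add Hi /= => H.
  have := it_rev H. rewrite flipdK. by rewrite addKn.
have hk := odd_double_half k. rewrite -addnn in hk.
have lej : k./2 <= k by lia.
have [d Hd] := it_some lej HK.
have := key _ _ lej Hd.
case: (odd k) hk => /= hk.
- have -> : k - k./2 = k./2.+1 by lia.
  rewrite itS Hd /= => /phiE. rewrite flipdK => /hh_inv [_]. by rewrite eqxx.
- have -> : k - k./2 = k./2 by lia.
  rewrite Hd => -[]. case: d {Hd} => p b [] /=. by case: b.
Qed.

Lemma no_repeat s (src : hh A B (flipd s) = None) i j a :
  i < j -> it A B i s = Some a -> it A B j s = Some a -> False.
Proof.
elim: i j a => [|i IH] [|j] a // lt.
- case=> <-. rewrite itS. case E: (it A B j s) => [c|] //= /phiE /hh_inv [H _].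
  by rewrite src in H.
- rewrite !itS. case E: (it A B i s) => [c|] //= Hc.
  case E': (it A B j s) => [c'|] //= Hc'.
  have eq := phi_inj Hc Hc'. subst c'. exact: IH (lt : i < j) E E'.
Qed.

Lemma terminates s (src : hh A B (flipd s) = None) :
  exists k e, k < #|{: dart}| /\ it A B k s = Some e /\ hh A B e = None.
Proof.
set N := #|{: dart}|.
case: (boolP [exists i : 'I_N.+1, it A B i s == None]).
- move=> /existsP [i /eqP Hi].
  have ex : exists k, (fun k => it A B k s == None) k by exists i; apply/eqP.
  case: (ex_minnP ex) => k0 /eqP H0 Hmin.
  have lek : k0 <= i by apply: Hmin; apply/eqP.
  case: k0 H0 Hmin lek => [|k1] // H0 Hmin lek.
  case E: (it A B k1 s) => [e|].
  + exists k1, e; split; first by have := ltn_ord i; lia.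
    split => //. move: H0; rewrite itS E /= /phi. by case: (hh A B e).
  + have := Hmin k1. rewrite E eqxx => /(_ isT). lia.
- rewrite negb_exists => /forallP Hall.
  pose g (i : 'I_N.+1) : dart := odflt s (it A B i s).
  have gS (i : 'I_N.+1) : it A B i s = Some (g i).
    rewrite /g. have := Hall i. by case: (it A B i s).
  have ginj : injective g.
    move=> i j Hij. apply/val_inj/eqP. case: (ltngtP i j) => // lt.
    + by exfalso; apply: (no_repeat src lt (gS i)); rewrite Hij gS.
    + by exfalso; apply: (no_repeat src lt (gS j)); rewrite -Hij gS.
  have := leq_card g ginj. rewrite card_ord. by rewrite ltnn.
Qed.

End Net.

Lemma card_dart (T : finType) : #|{: dart T}| = #|T| * 2.
Proof. by rewrite card_prod card_bool. Qed.

Lemma it_embed (T1 T2 : finType) (E : T1 -> T2) A1 B1 A2 B2 :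
  (forall d d', hh A1 B1 d = Some d' -> hh A2 B2 (E d.1, d.2) = Some (E d'.1, d'.2)) ->
  forall k d e, it A1 B1 k d = Some e -> it A2 B2 k (E d.1, d.2) = Some (E e.1, e.2).
Proof.
move=> H k. elim: k => [|k IH] d e /=; first by case=> <-.
rewrite /phi. case Eh: (hh A1 B1 d) => [d'|] //= Hit.
rewrite (H _ _ Eh) /=. exact: (IH _ _ Hit).
Qed.

Lemma run_ok m (A B : 'I_m -> option 'I_m) fuel k p e :
  it A B k (p, true) = Some e -> hh A B e = None -> k < 2 * fuel ->
  gh_run fuel A B p = e.2.
Proof.
elim: fuel k p => [|f IH] k p; first by rewrite muln0.
move=> Hit Hh Hk /=.
case: k Hit Hk => [|k] Hit Hk.
- injection Hit as He; subst e. move: Hh; rewrite /hh /=. by case: (B p).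
- move: Hit; rewrite /= /phi /hh /=. case EB: (B p) => [q|] //= Hit.
  case: k Hit Hk => [|k] Hit Hk.
  + injection Hit as He; subst e. move: Hh; rewrite /hh /=. by case: (A q) => //=.
  + move: Hit; rewrite /= /phi /hh /=. case EA: (A q) => [r|] //= Hit.
    apply: IH Hit Hh _. lia.
Qed.

Section Fcomp.
Variable n : nat.

Definition fcomputes (T : finType) (tap : bits n -> T) (A B : bits n -> T -> option T)
    (f : bits n -> bits n -> bool) :=
  (forall x, matchT (A x) /\ A x (tap x) = None) /\ (forall y, matchT (B y)) /\
  (forall x y, exists e, gwalk (A x) (B y) (tap x, true) e /\ e.2 = f x y).

Lemma gh_fcomp m (P : gh_protocol n m) f :
  gh_computes P f -> fcomputes (gh_tap P) (gh_alice P) (gh_bob P) f.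
Proof.
case=> [[HA HB] Hout]. split; first exact: HA. split; first exact: HB.
move=> x y. have [mA At] := HA x.
have src : hh (gh_alice P x) (gh_bob P y) (flipd (gh_tap P x, true)) = None.
  by rewrite /hh /= At.
have [k [e [lt [Hk He]]]] := terminates mA (HB y) src.
exists e; split; first by exists k.
rewrite -Hout /gh_output. symmetry. apply: run_ok Hk He _.
move: lt; rewrite card_dart card_ord. lia.
Qed.

Lemma fcomp_gh m (P : gh_protocol n m) f :
  fcomputes (gh_tap P) (gh_alice P) (gh_bob P) f -> gh_computes P f.
Proof.
case=> HA [HB Hw]. split; first by split.
move=> x y. have [mA At] := HA x.
have src : hh (gh_alice P x) (gh_bob P y) (flipd (gh_tap P x, true)) = None.
  by rewrite /hh /= At.
have [k [e' [lt [Hk He']]]] := terminates mA (HB y) src.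
have [e [[j [Hj He]] <-]] := Hw x y.
have -> := it_det Hk He' Hj He.
rewrite /gh_output. apply: run_ok Hk He' _.
move: lt; rewrite card_dart card_ord. lia.
Qed.

Lemma fcomp_computable (T : finType) tap (A B : bits n -> T -> option T) f :
  fcomputes tap A B f -> gh_computable f #|T|.
Proof.
case=> HA [HB Hw].
pose er : T -> 'I_#|T| := enum_rank. pose ev : 'I_#|T| -> T := enum_val.
have evK : cancel ev er by exact: enum_valK.
have erK : cancel er ev by exact: enum_rankK.
clearbody er ev.
pose A' x i := omap er (A x (ev i)).
pose B' y i := omap er (B y (ev i)).
have mtr : forall M : T -> option T, matchT M -> matchT (fun i => omap er (M (ev i))).
  move=> M mM i j /=. case E: (M (ev i)) => [q|] //= [<-].
  have [ne back] := mM _ _ E. rewrite erK back /= evK. split => //.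
  apply/negP => /eqP Eq. move: ne. by rewrite -Eq erK eqxx.
exists (GHProtocol (fun x => er (tap x)) A' B'). apply: fcomp_gh => /=.
split.
  move=> x. split; first exact: mtr (proj1 (HA x)).
  by rewrite /A' (erK (tap x)) (proj2 (HA x)).
split; first by move=> y; exact: mtr (HB y).
move=> x y. have [e [[k [Hk He]] Hf]] := Hw x y.
exists (er e.1, e.2); split => //. exists k. split.
- have emb : forall d d', hh (A x) (B y) d = Some d' ->
      hh (A' x) (B' y) (er d.1, d.2) = Some (er d'.1, d'.2).
    move=> [p s] d' /=. rewrite /hh /A' /B' /=.
    case: s => /=; rewrite (erK p); [case: (B y p) | case: (A x p)] => //= q [<-] //.
  exact: (it_embed emb Hk).
- move: He. case: e {Hk Hf} => p s. rewrite /hh /A' /B' /=.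
  by case: s => /=; rewrite (erK p); [case: (B y p) | case: (A x p)].
Qed.

Definition uA (f : bits n -> bits n -> bool) (x : bits n) (p : bool * bits n) :
  option (bool * bits n) := None.
Definition uB (f : bits n -> bits n -> bool) (y : bits n) (p : bool * bits n) :
  option (bool * bits n) := if f p.2 y then None else Some (~~ p.1, p.2).

Lemma universal (f : bits n -> bits n -> bool) : gh_computable f #|{: bool * bits n}|.
Proof.
apply: (@fcomp_computable _ (fun x => (false, x)) (uA f) (uB f)).
split; first by move=> x; split.
split.
  move=> y [c p] j. rewrite /uB /=. case E: (f p y) => //= -[<-] /=.
  rewrite negbK E; split => //. rewrite xpair_eqE. by case: c.
move=> x y. case Ef: (f x y).
- exists ((false, x), true). split => //. exists 0. split => //.
  by rewrite /hh /= /uB /= Ef.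
- exists ((true, x), false). split => //. exists 1. split => //.
  by rewrite /= /phi /hh /= /uB /= Ef.
Qed.

Lemma GH_spec (f : bits n -> bits n -> bool) :
  gh_computable f (GH f) /\ forall m, gh_computable f m -> GH f <= m.
Proof.
have ex : exists m, gh_computableb f m.
  exists #|{: bool * bits n}|. rewrite /gh_computableb.
  by case: excluded_middle_informative => // [[]]; apply: universal.
rewrite /GH. case: excluded_middle_informative => [H|H]; last by [].
case: (ex_minnP H) => m Hm Hmin. split.
- move: Hm; rewrite /gh_computableb. by case: excluded_middle_informative.
- move=> m' Hm'. apply: Hmin. rewrite /gh_computableb.
  by case: excluded_middle_informative.
Qed.

Lemma GH_pos (f : bits n -> bits n -> bool) : 0 < GH f.
Proof.
have [[P _] _] := GH_spec f.
exact: leq_ltn_trans (leq0n _) (ltn_ord (gh_tap P (nseq_tuple n false))).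
Qed.

End Fcomp.

Section Base.
Variables (n : nat) (T C : finType) (tap : bits n -> T)
  (A B : bits n -> T -> option T) (ca cb : C -> option C).

Definition bA x (cp : C * T) : option (C * T) :=
  match A x cp.2 with
  | Some q => Some (cp.1, q)
  | None => if cp.2 == tap x then None else omap (fun c' => (c', cp.2)) (ca cp.1)
  end.
Definition bB y (cp : C * T) : option (C * T) :=
  match B y cp.2 with
  | Some q => Some (cp.1, q)
  | None => omap (fun c' => (c', cp.2)) (cb cp.1)
  end.

Lemma bA_match x : matchT (A x) -> matchT ca -> matchT (bA x).
Proof.
move=> mA mc [c p] [c' p']. rewrite /bA /=. case E: (A x p) => [q|].
- case=> <- <-. have [ne back] := mA _ _ E. rewrite /= back; split=> //.
  by rewrite xpair_eqE (negbTE ne) andbF.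
- case: eqP => // Hp. case Ec: (ca c) => [c1|] //= [<- <-].
  have [ne back] := mc _ _ Ec. rewrite /= E.
  have -> : (p == tap x) = false by apply/eqP.
  rewrite /= back; split=> //. by rewrite xpair_eqE (negbTE ne).
Qed.

Lemma bB_match y : matchT (B y) -> matchT cb -> matchT (bB y).
Proof.
move=> mB mc [c p] [c' p']. rewrite /bB /=. case E: (B y p) => [q|].
- case=> <- <-. have [ne back] := mB _ _ E. rewrite /= back; split=> //.
  by rewrite xpair_eqE (negbTE ne) andbF.
- case Ec: (cb c) => [c1|] //= [<- <-].
  have [ne back] := mc _ _ Ec. rewrite /= E back; split=> //.
  by rewrite xpair_eqE (negbTE ne).
Qed.

Lemma bA_tap x c : A x (tap x) = None -> bA x (c, tap x) = None.
Proof. by move=> At; rewrite /bA /= At eqxx. Qed.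

Lemma base_walk x y (mA : matchT (A x)) (mB : matchT (B y))
  (At : A x (tap x) = None) e (He : gwalk (A x) (B y) (tap x, true) e) c0 c1
  (Hc : (if e.2 then cb c0 else ca c0) = Some c1) :
  gwalk (bA x) (bB y) ((c0, tap x), true) ((c1, tap x), false).
Proof.
case: He => k [Hk He].
have ne : e != (tap x, false).
  apply/negP => /eqP Ee. by apply: (no_return mA mB (s := (tap x, true)) (k := k)); rewrite Hk Ee.
have emb : forall c d d', hh (A x) (B y) d = Some d' ->
    hh (bA x) (bB y) ((c, d.1), d.2) = Some ((c, d'.1), d'.2).
  move=> c [p s] d' /=. rewrite /hh /=.
  case: s => /=; rewrite /bA /bB /=; [case: (B y p) | case: (A x p)] => //= q [<-] //.
have H1 := it_embed (emb c0) Hk.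
have Hmid : phi (bA x) (bB y) ((c0, e.1), e.2) = Some ((c1, e.1), ~~ e.2).
  move: He Hc ne. case: e {Hk H1} => p [] /= He Hc ne; move: He; rewrite /phi /hh /= /bA /bB /=.
  - by case: (B y p) => //= _; rewrite Hc.
  - case: (A x p) => //= _. case: eqP => [Ep|_] //=; last by rewrite Hc.
    by move: ne; rewrite Ep eqxx.
have H2 := it_embed (emb c1) (it_rev mA mB Hk).
exists (k + k.+1). split; last by rewrite /hh /= bA_tap.
rewrite it_add H1 /= Hmid /=. exact: H2.
Qed.
End Base.

Record gadget (n : nat) (T : finType) := Gadget {
  gin : bool -> bits n -> T; gout : bool -> bits n -> T;
  gA : bits n -> T -> option T; gB : bits n -> T -> option T }.

Definition gok n (T : finType) (G : gadget n T) (g : bits n -> bits n -> bool) (two : bool) :=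
  (forall x, matchT (gA G x)) /\ (forall y, matchT (gB G y)) /\
  (forall x b, gA G x (gin G b x) = None /\ gA G x (gout G b x) = None) /\
  (forall x b b', gin G b x != gout G b' x) /\
  (forall x, gout G false x != gout G true x) /\
  (two -> forall x, gin G false x != gin G true x) /\
  (forall x y b, (b ==> two) ->
      gwalk (gA G x) (gB G y) (gin G b x, true) (gout G (b (+) g x y) x, false)).

Lemma gok_ext n (T : finType) (G : gadget n T) g g' two :
  gok G g two -> (forall x y, g x y = g' x y) -> gok G g' two.
Proof.
case=> h1 [h2 [h3 [h4 [h5 [h6 h7]]]]] E. do 6 (split => //).
move=> x y b; rewrite -E; apply: h7.
Qed.

Section Gadgets.
Variables (n : nat) (T : finType) (tap : bits n -> T)
  (A B : bits n -> T -> option T) (f : bits n -> bits n -> bool).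
Hypothesis Hf : fcomputes tap A B f.

Definition ca2 (c : bool * bool) : option (bool * bool) := Some (~~ c.1, c.2).
Definition cb2 (c : bool * bool) : option (bool * bool) := Some (~~ c.1, ~~ c.2).

Lemma ca2_match : matchT ca2.
Proof.
move=> [a b] j [<-] /=. rewrite /ca2 /= negbK; split => //. by rewrite xpair_eqE; case: a.
Qed.
Lemma cb2_match : matchT cb2.
Proof.
move=> [a b] j [<-] /=. rewrite /cb2 /= !negbK; split => //. by rewrite xpair_eqE; case: a.
Qed.

Definition two_gadget : gadget n ((bool * bool) * T)%type :=
  Gadget (fun b x => ((false, b), tap x)) (fun b x => ((true, b), tap x))
         (bA tap A ca2) (bB B cb2).

Lemma two_ok : gok two_gadget f true.
Proof.
case: Hf => HA [HB Hw].
split; first by move=> x; apply: bA_match ca2_match; case: (HA x).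
split; first by move=> y; apply: bB_match cb2_match.
split; first by move=> x b; rewrite /= !bA_tap //; case: (HA x).
split; first by move=> x b b'; apply/negP => /eqP [].
split; first by move=> x /=; apply/negP => /eqP [].
split; first by move=> _ x /=; apply/negP => /eqP [].
move=> x y b _ /=. have [e [He Hef]] := Hw x y.
have [mA At] := HA x.
apply: (base_walk mA (HB y) At He). rewrite Hef /ca2 /cb2 /=.
by case: (f x y); rewrite ?addbT ?addbF.
Qed.

Definition ca1 (c : option bool) : option (option bool) :=
  match c with None => Some (Some false) | Some false => Some None | Some true => None end.
Definition cb1 (c : option bool) : option (option bool) :=
  match c with None => Some (Some true) | Some true => Some None | Some false => None end.

Lemma ca1_match : matchT ca1.
Proof. by move=> [[]|] j //= [<-]. Qed.
Lemma cb1_match : matchT cb1.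
Proof. by move=> [[]|] j //= [<-]. Qed.

Definition one_gadget : gadget n (option bool * T)%type :=
  Gadget (fun _ x => (None, tap x)) (fun b x => (Some b, tap x))
         (bA tap A ca1) (bB B cb1).

Lemma one_ok : gok one_gadget f false.
Proof.
case: Hf => HA [HB Hw].
split; first by move=> x; apply: bA_match ca1_match; case: (HA x).
split; first by move=> y; apply: bB_match cb1_match.
split; first by move=> x b; rewrite /= !bA_tap //; case: (HA x).
split; first by move=> x b b'; apply/negP => /eqP [].
split; first by move=> x /=; apply/negP => /eqP [].
split; first by [].
move=> x y [] //= _. have [e [He Hef]] := Hw x y.
have [mA At] := HA x.
apply: (base_walk mA (HB y) At He). rewrite Hef /ca1 /cb1 /=.
by case: (f x y).
Qed.
End Gadgets.

Section Comp.
Variables (n : nat) (T1 T2 : finType) (G1 : gadget n T1) (G2 : gadget n T2).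

Definition cA x (p : T1 + T2) : option (T1 + T2) :=
  match p with
  | inl p1 => if p1 == gout G1 false x then Some (inr (gin G2 false x))
              else if p1 == gout G1 true x then Some (inr (gin G2 true x))
              else omap inl (gA G1 x p1)
  | inr p2 => if p2 == gin G2 false x then Some (inl (gout G1 false x))
              else if p2 == gin G2 true x then Some (inl (gout G1 true x))
              else omap inr (gA G2 x p2)
  end.
Definition cB y (p : T1 + T2) : option (T1 + T2) :=
  match p with
  | inl p1 => omap inl (gB G1 y p1)
  | inr p2 => omap inr (gB G2 y p2)
  end.

Definition gcomp : gadget n (T1 + T2)%type :=
  Gadget (fun b x => inl (gin G1 b x)) (fun b x => inr (gout G2 b x)) cA cB.

Variables (g h : bits n -> bits n -> bool) (two1 : bool).
Hypotheses (H1 : gok G1 g two1) (H2 : gok G2 h true).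

Lemma comp_ok : gok gcomp (fun x y => g x y (+) h x y) two1.
Proof.
case: H1 => m1A [m1B [N1 [D1 [O1 [I1 W1]]]]].
case: H2 => m2A [m2B [N2 [D2 [O2 [I2 W2]]]]].
have I2' := I2 isT.
have cAin2 : forall x b, cA x (inr (gout G2 b x)) = None.
  move=> x b /=. rewrite eq_sym (negbTE (D2 x false b)) eq_sym (negbTE (D2 x true b)) /=.
  by case: (N2 x b) => _ ->.
have cAinl : forall x p q, gA G1 x p = Some q -> cA x (inl p) = Some (inl q).
  move=> x p q E /=.
  have ne0 : p != gout G1 false x.
    by apply/negP => /eqP Ep; move: E; rewrite Ep; case: (N1 x false) => _ ->.
  have ne1 : p != gout G1 true x.
    by apply/negP => /eqP Ep; move: E; rewrite Ep; case: (N1 x true) => _ ->.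
  by rewrite (negbTE ne0) (negbTE ne1) E.
have cAinr : forall x p q, gA G2 x p = Some q -> cA x (inr p) = Some (inr q).
  move=> x p q E /=.
  have ne0 : p != gin G2 false x.
    by apply/negP => /eqP Ep; move: E; rewrite Ep; case: (N2 x false) => ->.
  have ne1 : p != gin G2 true x.
    by apply/negP => /eqP Ep; move: E; rewrite Ep; case: (N2 x true) => ->.
  by rewrite (negbTE ne0) (negbTE ne1) E.
split.
  move=> x [p|p] j.
  - rewrite /=. case: eqP => [->|n0]; first (case=> <-; split => //).
      by rewrite /= eqxx.
    case: eqP => [->|n1]; first (case=> <-; split => //).
      by rewrite /= eq_sym (negbTE (I2' x)) eqxx.
    case E: (gA G1 x p) => [q|] //= [<-]. have [ne back] := m1A x _ _ E.
    split; first by [].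
    by rewrite (cAinl _ _ _ back).
  - rewrite /=. case: eqP => [->|n0]; first (case=> <-; split => //).
      by rewrite /= eqxx.
    case: eqP => [->|n1]; first (case=> <-; split => //).
      by rewrite /= eq_sym (negbTE (O1 x)) eqxx.
    case E: (gA G2 x p) => [q|] //= [<-]. have [ne back] := m2A x _ _ E.
    split; first by [].
    by rewrite (cAinr _ _ _ back).
split.
  move=> y [p|p] j /=.
  - case E: (gB G1 y p) => [q|] //= [<-]. have [ne back] := m1B y _ _ E.
    by rewrite /= back.
  - case E: (gB G2 y p) => [q|] //= [<-]. have [ne back] := m2B y _ _ E.
    by rewrite /= back.
split.
  move=> x b; split; last exact: cAin2.
  rewrite /= (negbTE (D1 x b false)) (negbTE (D1 x b true)).
  by case: (N1 x b) => ->.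
split; first by [].
split; first by move=> x /=; exact: O2 x.
split; first by move=> t x /=; exact: I1 t x.
move=> x y b Hb /=.
have [k1 [Hk1 _]] := W1 x y b Hb.
set c := b (+) g x y.
have [k2 [Hk2 _]] := W2 x y c (implybT c).
have emb1 : forall d d', hh (gA G1 x) (gB G1 y) d = Some d' ->
    hh (cA x) (cB y) (inl d.1, d.2) = Some (inl d'.1, d'.2).
  move=> [p [|]] [q s] H.
  - move: H; rewrite /hh /=. by case: (gB G1 y p) => //= q' [-> <-].
  - have [E Es] : gA G1 x p = Some q /\ s = false.
      by move: H; rewrite /hh /=; case: (gA G1 x p) => //= q' [-> <-].
    subst s. change (omap (fun q => (q, false)) (cA x (inl p)) = Some (inl q, false)).
    by rewrite (cAinl _ _ _ E).
have emb2 : forall d d', hh (gA G2 x) (gB G2 y) d = Some d' ->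
    hh (cA x) (cB y) (inr d.1, d.2) = Some (inr d'.1, d'.2).
  move=> [p [|]] [q s] H.
  - move: H; rewrite /hh /=. by case: (gB G2 y p) => //= q' [-> <-].
  - have [E Es] : gA G2 x p = Some q /\ s = false.
      by move: H; rewrite /hh /=; case: (gA G2 x p) => //= q' [-> <-].
    subst s. change (omap (fun q => (q, false)) (cA x (inr p)) = Some (inr q, false)).
    by rewrite (cAinr _ _ _ E).
have Hmid : forall c, phi (cA x) (cB y) (inl (gout G1 c x), false) = Some (inr (gin G2 c x), true).
  move=> c'; rewrite /phi /hh /=. case: c' => /=; last by rewrite eqxx.
  by rewrite eq_sym (negbTE (O1 x)) eqxx.
exists (k1 + k2.+1). split.
- rewrite it_add (it_embed emb1 Hk1) /= Hmid /=.
  have -> : b (+) (g x y (+) h x y) = c (+) h x y by rewrite /c addbA.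
  exact: (it_embed emb2 Hk2).
- change (omap (fun q => (q, false)) (cA x (inr (gout G2 (b (+) (g x y (+) h x y)) x))) = None).
  by rewrite cAin2.
Qed.
End Comp.

Section Final.
Variables (n : nat) (T : finType) (G : gadget n T) (g : bits n -> bits n -> bool).
Hypothesis HG : gok G g false.

Definition fA x (p : option T) : option (option T) :=
  match p with
  | Some p1 => if p1 == gout G true x then Some None else omap Some (gA G x p1)
  | None => Some (Some (gout G true x))
  end.
Definition fB y (p : option T) : option (option T) :=
  match p with Some p1 => omap Some (gB G y p1) | None => None end.

Lemma final_ok : fcomputes (fun x => Some (gin G false x)) fA fB g.
Proof.
case: HG => mA [mB [N [D [O [_ W]]]]].
have fAS : forall x p q, gA G x p = Some q -> fA x (Some p) = Some (Some q).
  move=> x p q E /=. have ne : p != gout G true x.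
    by apply/negP => /eqP Ep; move: E; rewrite Ep; case: (N x true) => _ ->.
  by rewrite (negbTE ne) E.
split.
  move=> x; split.
  - move=> [p|] j.
    + rewrite /=. case: eqP => [->|ne]; first by case=> <-; split.
      case E: (gA G x p) => [q|] //= [<-]. have [ne' back] := mA x _ _ E.
      by split; [|exact: fAS back].
    + case=> <-. split => //. by rewrite /= eqxx.
  - rewrite /= (negbTE (D x false true)). by case: (N x false) => ->.
split.
  move=> y [p|] j //=. case E: (gB G y p) => [q|] //= [<-].
  have [ne back] := mB y _ _ E. by rewrite /= back.
move=> x y. have [k [Hk _]] := W x y false isT.
have emb : forall d d', hh (gA G x) (gB G y) d = Some d' ->
    hh (fA x) (fB y) (Some d.1, d.2) = Some (Some d'.1, d'.2).
  move=> [p [|]] [q s] H.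
  - move: H; rewrite /hh /=. by case: (gB G y p) => //= q' [-> <-].
  - have [E Es] : gA G x p = Some q /\ s = false.
      by move: H; rewrite /hh /=; case: (gA G x p) => //= q' [-> <-].
    subst s. change (omap (fun q => (q, false)) (fA x (Some p)) = Some (Some q, false)).
    by rewrite (fAS _ _ _ E).
have H1 := it_embed emb Hk. rewrite /= in H1.
case Eg: (g x y) H1 => H1.
- exists (None, true). split => //. exists k.+1. split => //.
  rewrite itS H1 /= /phi /hh /= eqxx. done.
- exists (Some (gout G false x), false). split => //. exists k. split => //.
  rewrite /hh /= (negbTE (O x)). by case: (N x false) => _ ->.
Qed.
End Final.

Lemma main_aux n k (F : 'I_k.+1 -> bits n -> bits n -> bool) :
  exists (T : finType) (G : gadget n T),
    gok G (xor_family F) false /\ #|T|.+1 <= 4 * \sum_(i < k.+1) GH (F i).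
Proof.
elim: k F => [|k IH] F.
- have [[P HP] _] := GH_spec (F ord0).
  have Hf := gh_fcomp HP.
  eexists; exists (one_gadget (gh_tap P) (gh_alice P) (gh_bob P)). split.
  + apply: gok_ext (one_ok Hf) _ => x y. by rewrite /xor_family big_ord1.
  + rewrite big_ord1 card_prod card_option card_bool card_ord.
    have := GH_pos (F ord0). lia.
- pose F' := fun i : 'I_k.+1 => F (widen_ord (leqnSn k.+1) i).
  have [T1 [G1 [HG1 Hs1]]] := IH F'.
  have [[P HP] _] := GH_spec (F ord_max).
  have Hf := gh_fcomp HP.
  have H2 := two_ok Hf.
  eexists; exists (gcomp G1 (two_gadget (gh_tap P) (gh_alice P) (gh_bob P))). split.
  + apply: gok_ext (comp_ok HG1 H2) _ => x y.
    by rewrite /xor_family [in RHS]big_ord_recr.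
  + rewrite [in X in _ <= 4 * X]big_ord_recr /= card_sum !card_prod !card_bool card_ord.
    move: Hs1. move: (\sum_(i < k.+1) GH (F' i)) => S. lia.
Qed.

Theorem mainTheorem12 (n k : nat) (F : 'I_k -> bits n -> bits n -> bool) :
  0 < k ->
  GH (xor_family F) <= 4 * \sum_(i < k) GH (F i).
Proof.
case: k F => // k F _.
have [T [G [HG Hs]]] := main_aux F.
have Hc := fcomp_computable (final_ok HG).
have [_ Hmin] := GH_spec (xor_family F).
apply: leq_trans (Hmin _ Hc) _. by rewrite card_option.
Qed.
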